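(* Let $m$ be a positive integer and let $\phi_m$ be the unique root of $\phi^{m+1}+\phi^m-1=0$ in $(0,1)$. Then $\theta=\phi_m^2$ is the unique solution in $(0,1)$ of the equation $L_m(\theta)=L_{m+1}(\theta)$.
   Context: $\lg$ denotes $\log_2$. For a positive integer $m$ and $0<\theta<1$, $$L_m(\theta)=\begin{cases}1+\lg m+\dfrac{\theta^{m/2}}{1-\theta^{m/2}}, & m=2^\beta \text{ for some integer } \beta\ge0,\\[2mm] 1+\lfloor\lg m\rfloor+\dfrac{\theta^{(2^{\lceil\lg m\rceil}-m)/2}}{1-\theta^{m/2}}, & \text{otherwise.}\end{cases}$$ (This is the asymptotic average code length of the modified Rice-Golomb code with parameter $m$ for Laplace-distributed residuals with parameter $\theta$.) *)

(* Defs.v *)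
From mathcomp Require Import all_boot all_order all_algebra.
From mathcomp Require Import all_classical all_reals all_analysis.
Set Implicit Arguments. Unset Strict Implicit. Unset Printing Implicit Defensive.
Import Order.TTheory GRing.Theory Num.Theory.
Local Open Scope ring_scope.

Definition lg {R : realType} (x : R) : R := ln x / ln 2.

(* L_m(theta): asymptotic average code length of the modified Rice-Golomb code *)
Definition L {R : realType} (m : nat) (theta : R) : R :=
  if `[< exists beta : nat, m = (2 ^ beta)%N >] then
    1 + lg (m%:R) + theta `^ (m%:R / 2) / (1 - theta `^ (m%:R / 2))
  else
    1 + (Num.floor (lg (m%:R : R)))%:~R
      + theta `^ (((2 : R) ^ Num.ceil (lg (m%:R : R)) - m%:R) / 2)
        / (1 - theta `^ (m%:R / 2)).

(* Main.v *)
Require Import Defs.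
From mathcomp Require Import all_boot all_order all_algebra.
From mathcomp Require Import all_classical all_reals all_analysis.
From mathcomp Require Import lra ring zify.
Import Order.TTheory GRing.Theory Num.Theory.
Local Open Scope ring_scope.

Section S.
Variable R : realType.

Lemma ln2_gt0' : 0 < ln (2:R).
Proof. apply: ln_gt0; lra. Qed.

Lemma lg_pow (k : nat) : lg ((2 ^ k)%N%:R : R) = k%:R.
Proof.
have -> : ((2 ^ k)%N%:R : R) = 2 ^+ k by rewrite natrX.
rewrite /lg lnXn //.
have c0 := ln2_gt0'.
have aux : forall c : R, c != 0 -> c *+ k / c = k%:R.
  by move=> c cn; rewrite -(mulr_natr c k) mulrAC divff ?mul1r.
by apply: aux; rewrite gt_eqF.
Qed.

Lemma lg_lt (x y : R) : 0 < x -> x < y -> lg x < lg y.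
Proof.
move=> x0 xy; rewrite /lg ltr_pM2r; last by rewrite invr_gt0 ln2_gt0'.
by rewrite ltr_ln // posrE (lt_trans x0 xy).
Qed.

Lemma lg_between (k m : nat) : (2 ^ k < m < 2 ^ k.+1)%N ->
  k%:R < lg (m%:R : R) < k.+1%:R.
Proof.
move=> /andP[h1 h2].
rewrite -(lg_pow k) -(lg_pow k.+1); apply/andP; split; apply: lg_lt.
- by rewrite ltr0n expn_gt0.
- by rewrite ltr_nat.
- by rewrite ltr0n (leq_ltn_trans _ h1).
- by rewrite ltr_nat.
Qed.

Lemma powR_half (t : R) (n : nat) : 0 < t -> (t ^+ 2) `^ (n%:R / 2) = t ^+ n.
Proof.
move=> t0.
rewrite -powR_mulrn ?ltW // -powRrM mulrCA divff ?mulr1 ?powR_mulrn ?ltW //.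
Qed.


Lemma L_pow (k : nat) (t : R) : 0 < t ->
  L (2 ^ k) (t ^+ 2) = 1 + k%:R + t ^+ (2 ^ k) / (1 - t ^+ (2 ^ k)).
Proof.
move=> t0; rewrite /L asboolT; last by exists k.
by rewrite lg_pow !powR_half.
Qed.

Lemma L_np (k m : nat) (t : R) : 0 < t -> (2 ^ k < m < 2 ^ k.+1)%N ->
  L m (t ^+ 2) = 1 + k%:R + t ^+ (2 ^ k.+1 - m) / (1 - t ^+ m).
Proof.
move=> t0 hb; rewrite /L asboolF; last first.
  by move=> [b hm]; move: hb; rewrite hm !ltn_exp2l //; lia.
have hl : k%:R < lg (m%:R : R) < k.+1%:R := lg_between k m hb.
have -> : Num.floor (lg (m%:R : R)) = k.
  apply: floor_def; rewrite intrD -!pmulrn.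
  by case/andP: hl => h1 h2; rewrite (ltW h1) /= natr1.
have -> : Num.ceil (lg (m%:R : R)) = k.+1.
  apply: ceil_def.
  have -> : ((k.+1)%:Z - 1) = k%:Z by rewrite -addn1 PoszD addrK.
  rewrite -!pmulrn.
  by case/andP: hl => h1 h2; rewrite h1 ltW.
have -> : (2:R) ^ (k.+1 : int) - m%:R = (2 ^ k.+1 - m)%N%:R.
  rewrite natrB; last by move: hb => /andP[_ /ltnW].
  by rewrite natrX.
by rewrite !powR_half.
Qed.


End S.

Section S.
Variable R : realType.
Lemma alg_gen (t a b A : R) : 1 - a != 0 -> 1 - t * a != 0 ->
  (A + b / (1 - t * a)) - (A + t * b / (1 - a)) =
  b * (1 - t) * (1 - a - t * a) / ((1 - a) * (1 - t * a)).
Proof. by move=> h1 h2; field; rewrite h1 h2. Qed.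

Lemma alg_b1 (t a A : R) : 1 - a != 0 -> 1 - t * a != 0 ->
  (A + 1 + t * a / (1 - t * a)) - (A + t / (1 - a)) =
  1 * (1 - t) * (1 - a - t * a) / ((1 - a) * (1 - t * a)).
Proof. by move=> h1 h2; field; rewrite h1 h2. Qed.

Lemma one_sub_pow_neq0 (t : R) n : 0 < t < 1 -> (0 < n)%N -> 1 - t ^+ n != 0.
Proof.
move=> /andP[t0 t1] n0.
have h : t ^+ n < 1 by rewrite expr_lt1 // ltW.
by rewrite subr_eq0 gt_eqF.
Qed.

End S.

Section S.
Variable R : realType.

Lemma diffL (m : nat) (t : R) : (0 < m)%N -> 0 < t < 1 ->
  exists e : nat, L m.+1 (t ^+ 2) - L m (t ^+ 2) =
  t ^+ e * (1 - t) * (1 - t ^+ m - t * t ^+ m) / ((1 - t ^+ m) * (1 - t * t ^+ m)).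
Proof.
move=> m0 ht; have t0 : 0 < t by case/andP: ht.
have hm1 : 1 - t ^+ m != 0 by rewrite one_sub_pow_neq0.
have hm2 : 1 - t * t ^+ m != 0 by rewrite -exprS one_sub_pow_neq0.
have h1 := trunc_logP (isT : (1 < 2)%N) m0.
have h2 := trunc_log_ltn m (isT : (1 < 2)%N).
move: h1 h2; set k := trunc_log 2 m => h1 h2.
case: (ltngtP (2 ^ k) m) h1 => // [hlt _ | heq _].
- have [hB1 | hB2] : m.+1 = (2 ^ k.+1)%N \/ (m.+1 < 2 ^ k.+1)%N.
    by move: h2; rewrite leq_eqVlt => /orP[/eqP ->|->]; [left|right].
  + exists 0%N.
    have LM1 : L m.+1 (t ^+ 2) = 1 + k%:R + 1 + t * t ^+ m / (1 - t * t ^+ m).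
      by rewrite hB1 L_pow // -hB1 exprS -natr1 addrA.
    have LM : L m (t ^+ 2) = 1 + k%:R + t / (1 - t ^+ m).
      rewrite (@L_np R k _ t t0); last by rewrite hlt h2.
      have -> : (2 ^ k.+1 - m = 1)%N by rewrite -hB1 subSnn.
      by rewrite expr1.
    by rewrite LM1 LM expr0 alg_b1.
  + exists (2 ^ k.+1 - m.+1)%N.
    have LM1 : L m.+1 (t ^+ 2) = 1 + k%:R + t ^+ (2 ^ k.+1 - m.+1) / (1 - t * t ^+ m).
      by rewrite (@L_np R k _ t t0) ?hB2 ?(ltn_trans hlt) // exprS.
    have LM : L m (t ^+ 2) = 1 + k%:R + t * t ^+ (2 ^ k.+1 - m.+1) / (1 - t ^+ m).
      rewrite (@L_np R k _ t t0) ?hlt ?h2 //.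
      by rewrite -exprS subnSK.
    by rewrite LM1 LM alg_gen.
- case: k heq h2 => [|k] heq h2.
  + exists 0%N; move: heq hm1 hm2; rewrite expn0 => <- hm1 hm2.
    rewrite (@L_pow R 1 t t0) (@L_pow R 0 t t0) expn1 expn0 expr0 !expr1 expr2.
    rewrite expr1 in hm1 hm2.
    by field; rewrite hm1 hm2.
  + exists (2 ^ k.+2 - m.+1)%N.
    have p0 : (0 < 2 ^ k)%N by rewrite expn_gt0.
    have hm : (2 <= m)%N by rewrite -heq expnS; lia.
    have he : m = (2 ^ k.+2 - m.+1).+1.
      rewrite expnS heq; lia.
    have LM : L m (t ^+ 2) = 1 + k.+1%:R + t * t ^+ (2 ^ k.+2 - m.+1) / (1 - t ^+ m).
      by rewrite -exprS -he -heq L_pow.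
    have LM1 : L m.+1 (t ^+ 2) = 1 + k.+1%:R + t ^+ (2 ^ k.+2 - m.+1) / (1 - t * t ^+ m).
      rewrite (@L_np R k.+1 _ t t0) ?exprS //.
      by rewrite [(2 ^ k.+2)%N]expnS heq; lia.
    by rewrite LM1 LM alg_gen.
Qed.

End S.

Lemma mono_eq (R : realType) (m : nat) (t p : R) : (0 < m)%N -> 0 < t -> 0 < p ->
  t ^+ m.+1 + t ^+ m = p ^+ m.+1 + p ^+ m -> t = p.
Proof.
move=> m0 t0 p0 h.
case: (ltgtP t p) => // htp.
- have a1 : t ^+ m < p ^+ m by rewrite ltrXn2r ?ltW // -lt0n.
  have a2 : t ^+ m.+1 < p ^+ m.+1 by rewrite ltrXn2r ?ltW.
  lra.
- have a1 : p ^+ m < t ^+ m by rewrite ltrXn2r ?ltW // -lt0n.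
  have a2 : p ^+ m.+1 < t ^+ m.+1 by rewrite ltrXn2r ?ltW.
  lra.
Qed.

Theorem lemma3 (R : realType) (m : nat) (phi : R) :
  (0 < m)%N ->
  0 < phi < 1 -> phi ^+ m.+1 + phi ^+ m - 1 = 0 ->
  (0 < phi ^+ 2 < 1 /\ L m (phi ^+ 2) = L m.+1 (phi ^+ 2)) /\
  (forall theta : R, 0 < theta < 1 -> L m theta = L m.+1 theta -> theta = phi ^+ 2).
Proof.
move=> m0 hp heq.
have p0 : 0 < phi by case/andP: hp.
have p1 : phi < 1 by case/andP: hp.
split.
  split; first by rewrite exprn_gt0 //= expr_lt1 ?ltW.
  have [e he] := @diffL R m phi m0 hp; apply/esym/eqP; rewrite -subr_eq0 he.
  have -> : 1 - phi ^+ m - phi * phi ^+ m = 0 by rewrite -exprS; lra.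
  by rewrite mulr0 mul0r.
move=> theta /andP[th0 th1] hL.
set t := Num.sqrt theta.
have tt : theta = t ^+ 2 by rewrite sqr_sqrtr ?ltW.
have t0 : 0 < t by rewrite sqrtr_gt0.
have t1 : t < 1 by rewrite -sqrtr1 ltr_sqrt.
have ht : 0 < t < 1 by rewrite t0 t1.
have hm1 : 1 - t ^+ m != 0 by rewrite one_sub_pow_neq0.
have hm2 : 1 - t * t ^+ m != 0 by rewrite -exprS one_sub_pow_neq0.
have [e he] := @diffL R m t m0 ht.
rewrite tt in hL; move: he; rewrite hL subrr => /esym/eqP.
rewrite !mulf_eq0 invr_eq0 !mulf_eq0 expf_eq0 (negbTE hm1) (negbTE hm2) gt_eqF //=.
rewrite andbF /= (_ : (1 - t == 0) = false) /= ?orbF; last by rewrite subr_eq0 gt_eqF.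
move=> /eqP hz.
suff htp : t = phi by rewrite tt htp.
apply: (@mono_eq R m t phi m0 t0 p0).
rewrite exprS; lra.
Qed.
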